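(* Let $d=2$, $\mathcal{H}$ a separable Hilbert space, $\Lambda=\mathrm{Span}_\mathbb{Z}\{e_1,e_2\}\subset\mathbb{R}^2$, and $\{P(k)\}$ a family of orthogonal projectors of finite rank $m$ satisfying (P2)–(P4) below. Let $r\in\mathbb{Z}$. Then there exists a piecewise-smooth map $X:\partial\mathbb{B}_{\rm red}\to\mathcal{U}(\mathbb{C}^m)$ such that: (i) the winding number (degree) of $\det X:\partial\mathbb{B}_{\rm red}\to U(1)$, with $\partial\mathbb{B}_{\rm red}$ traversed $v_1\to v_2\to\cdots\to v_6\to v_1$, equals $-r$; (ii) whenever $\Phi:\partial\mathbb{B}_{\rm red}\to\mathcal{H}^m$, with $\Phi(k)$ an orthonormal basis of $\operatorname{Ran}P(k)$ for each $k$, satisfies the edge symmetries below, the frame $k\mapsto\Phi(k)\triangleleft X(k)$ also satisfies them; (iii) $X(k)\ne\mathrm{Id}$ only for $k\in E_3\cup E_4$.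
   Context: (P2) $\tau:\Lambda\to\mathcal{U}(\mathcal{H})$ is a unitary representation with $P(k+\lambda)=\tau_\lambda P(k)\tau_\lambda^{-1}$; (P3) $\Theta$ is antiunitary with $P(-k)=\Theta P(k)\Theta^{-1}$, $\Theta^2=\mathrm{Id}$; (P4) $\Theta\tau_\lambda=\tau_\lambda^{-1}\Theta$. In coordinates $(k_1,k_2)\leftrightarrow k_1e_1+k_2e_2$, $\mathbb{B}_{\rm red}=[0,\tfrac12]\times[-\tfrac12,\tfrac12]$, with vertices $v_1=(0,0)$, $v_2=(0,-\tfrac12)$, $v_3=(\tfrac12,-\tfrac12)$, $v_4=(\tfrac12,0)$, $v_5=(\tfrac12,\tfrac12)$, $v_6=(0,\tfrac12)$, and $E_i$ the segment from $v_i$ to $v_{i+1}$ ($v_7=v_1$). Edge symmetries: $\Phi(-k)=\Theta\Phi(k)$ for $k\in E_1\cup E_6$; $\Phi(k+e_2)=\tau_{e_2}\Phi(k)$ for $k\in E_2$; $\Phi(e_1-k)=\tau_{e_1}\Theta\Phi(k)$ for $k\in E_3\cup E_4$; $\Phi(k-e_2)=\tau_{e_2}^{-1}\Phi(k)$ for $k\in E_5$. Operators act on frames componentwise; $(\Phi\triangleleft U)_b=\sum_a\phi_aU_{ab}$. *)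

(* Defs.v *)
From mathcomp Require Import all_boot all_order all_algebra.
From mathcomp Require Import complex.
From mathcomp Require Import all_classical all_reals all_analysis.

Set Implicit Arguments.
Unset Strict Implicit.
Unset Printing Implicit Defensive.

Import Order.TTheory GRing.Theory Num.Theory.
Import numFieldNormedType.Exports.
Local Open Scope ring_scope.
Local Open Scope complex_scope.

Section Defs.
Variable R : realType.
Local Notation C := R[i].

(** * Geometry of the reduced Brillouin zone (d = 2), in coordinates
      (k1,k2) <-> k1 e1 + k2 e2. *)
Definition pt := (R * R)%type.
Definition padd (k l : pt) : pt := (k.1 + l.1, k.2 + l.2).
Definition popp (k : pt) : pt := (- k.1, - k.2).

Definition latt := (int * int)%type.
Definition lat_e1 : latt := (1%Z, 0%Z).
Definition lat_e2 : latt := (0%Z, 1%Z).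
Definition lat_opp (l : latt) : latt := (- l.1, - l.2)%R.
Definition lat_add (l l' : latt) : latt := (l.1 + l'.1, l.2 + l'.2)%R.
Definition lat_pt (l : latt) : pt := (l.1%:~R, l.2%:~R).

Definition lerp (p q : pt) (s : R) : pt :=
  (p.1 + s * (q.1 - p.1), p.2 + s * (q.2 - p.2)).
Definition on_seg (p q k : pt) : Prop :=
  exists2 s, 0 <= s <= 1 & k = lerp p q s.

(** vertices v1..v6 of B_red = [0,1/2] x [-1/2,1/2]; v7 = v1 *)
Definition vert (i : nat) : pt :=
  match i with
  | 2 => (0, - 2^-1)
  | 3 => (2^-1, - 2^-1)
  | 4 => (2^-1, 0)
  | 5 => (2^-1, 2^-1)
  | 6 => (0, 2^-1)
  | _ => (0, 0)
  end.

Definition edge (i : nat) (k : pt) : Prop := on_seg (vert i) (vert i.+1) k.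

Definition bdry (k : pt) : Prop := exists2 i, (1 <= i <= 6)%N & edge i k.

Definition loop (t : R) : pt :=
  if t <= 1 then lerp (vert 1) (vert 2) t
  else if t <= 2 then lerp (vert 2) (vert 3) (t - 1)
  else if t <= 3 then lerp (vert 3) (vert 4) (t - 2)
  else if t <= 4 then lerp (vert 4) (vert 5) (t - 3)
  else if t <= 5 then lerp (vert 5) (vert 6) (t - 4)
  else lerp (vert 6) (vert 1) (t - 5).

(** * Complex (pre-)Hilbert spaces: inner product antilinear in the first
      argument, linear in the second. *)
Section Hilbert.
Variable H : lmodType C.
Variable ip : H -> H -> C.

Definition inner_product : Prop :=
  [/\ (forall x y z (a : C), ip z (a *: x + y) = a * ip z x + ip z y),
      (forall x y, ip y x = (ip x y)^*),
      (forall x, 0 <= ip x x) &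
      (forall x, ip x x = 0 -> x = 0)].

Definition hnorm (x : H) : R := Num.sqrt (complex.Re (ip x x)).

Definition complete_ip : Prop :=
  forall u : nat -> H,
    (forall eps : R, 0 < eps -> exists N, forall n p, (N <= n)%N -> (N <= p)%N ->
        hnorm (u n - u p) < eps) ->
    exists l : H, forall eps : R, 0 < eps -> exists N, forall n, (N <= n)%N ->
        hnorm (u n - l) < eps.

Definition separable_ip : Prop :=
  exists s : nat -> H, forall (v : H) (eps : R), 0 < eps ->
    exists n, hnorm (v - s n) < eps.

Definition linear_op (T : H -> H) : Prop :=
  forall (a : C) x y, T (a *: x + y) = a *: T x + T y.
Definition antilinear_op (T : H -> H) : Prop :=
  forall (a : C) x y, T (a *: x + y) = a^* *: T x + T y.

Definition in_range (T : H -> H) (v : H) : Prop := exists w, v = T w.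

Definition orth_proj (T : H -> H) : Prop :=
  [/\ linear_op T, (forall x, T (T x) = T x) & (forall x y, ip (T x) y = ip x (T y))].

Definition rank_eq (T : H -> H) (m : nat) : Prop :=
  exists b : 'I_m -> H,
    [/\ (forall i, in_range T (b i)),
        (forall c : 'I_m -> C, \sum_i c i *: b i = 0 -> forall i, c i = 0) &
        (forall v, in_range T v -> exists c : 'I_m -> C, v = \sum_i c i *: b i)].

Definition unitary_op (U : H -> H) : Prop :=
  [/\ linear_op U, (forall x y, ip (U x) (U y) = ip x y) & (forall y, exists x, U x = y)].
Definition antiunitary_op (U : H -> H) : Prop :=
  [/\ antilinear_op U, (forall x y, ip (U x) (U y) = (ip x y)^*) &
      (forall y, exists x, U x = y)].

Definition unitary_rep (tau : latt -> H -> H) : Prop :=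
  [/\ (forall l, unitary_op (tau l)),
      (forall x, tau (0%Z, 0%Z) x = x) &
      (forall l l' x, tau (lat_add l l') x = tau l (tau l' x))].

Variable m : nat.
Definition frame := 'I_m -> H.

Definition frame_rmul (Phi : frame) (U : 'M[C]_m) : frame :=
  fun b => \sum_a U a b *: Phi a.

Definition onb_range (T : H -> H) (Phi : frame) : Prop :=
  [/\ (forall a, in_range T (Phi a)),
      (forall a b, ip (Phi a) (Phi b) = (a == b)%:R) &
      (forall v, in_range T v -> exists c : 'I_m -> C, v = \sum_a c a *: Phi a)].

(** edge symmetries of a frame Phi defined on the boundary of B_red
    (operators act componentwise; tau_{e2}^{-1} = tau_{-e2}) *)
Definition edge_sym (Theta : H -> H) (tau : latt -> H -> H) (Phi : pt -> frame) : Prop :=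
  [/\ (forall k, edge 1 k \/ edge 6 k -> forall a, Phi (popp k) a = Theta (Phi k a)),
      (forall k, edge 2 k -> forall a, Phi (padd k (lat_pt lat_e2)) a = tau lat_e2 (Phi k a)),
      (forall k, edge 3 k \/ edge 4 k ->
          forall a, Phi (padd (lat_pt lat_e1) (popp k)) a = tau lat_e1 (Theta (Phi k a))) &
      (forall k, edge 5 k ->
          forall a, Phi (padd k (popp (lat_pt lat_e2))) a = tau (lat_opp lat_e2) (Phi k a))].

End Hilbert.

Definition unitary_mx (m : nat) (U : 'M[C]_m) : Prop :=
  U *m (map_mx (fun z : C => z^*) U)^T = 1%:M.

Definition smoothR (g : R -> R) : Prop :=
  forall (n : nat) (x : R), derivable (derive1n n g) x 1.

Definition pw_smooth (m : nat) (X : pt -> 'M[C]_m) : Prop :=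
  forall i, (1 <= i <= 6)%N -> forall a b, exists gr gi : R -> R,
    [/\ smoothR gr, smoothR gi &
        forall s, 0 <= s <= 1 -> X (lerp (vert i) (vert i.+1) s) a b = gr s +i* gi s].

Definition expi2pi (th : R) : C := cos (2 * pi * th) +i* sin (2 * pi * th).

Definition winding (f : R -> C) (a b : R) (n : int) : Prop :=
  exists th : R -> R,
    [/\ {within `[a, b]%classic, continuous th}%classic,
        (forall t, a <= t <= b -> f t = expi2pi (th t)) &
        th b - th a = n%:~R].

End Defs.

(* Main.v *)
Require Import Defs.
From mathcomp Require Import all_boot all_order all_algebra.
From mathcomp Require Import complex.
From mathcomp Require Import all_classical all_reals all_analysis.
From mathcomp Require Import ring lra.
Import Order.TTheory GRing.Theory Num.Theory.
Import numFieldNormedType.Exports.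
Local Open Scope ring_scope.
Local Open Scope complex_scope.
Section S.
Variable R : realType.

Lemma expi2piD (x y : R) : expi2pi (x + y) = expi2pi x * expi2pi y.
Proof.
rewrite /expi2pi mulrDr cosD sinD /=; congr (_ +i* _); ring.
Qed.

Lemma expi2pi0 : expi2pi (0 : R) = 1.
Proof. by rewrite /expi2pi mulr0 cos0 sin0. Qed.

Lemma expi2pi1 : expi2pi (1 : R) = 1.
Proof. by rewrite /expi2pi mulr1 mulr_natl cos2pi sin2pi. Qed.

Lemma expi2piN (x : R) : expi2pi (- x) = (expi2pi x)^*.
Proof. by rewrite /expi2pi mulrN cosN sinN. Qed.

Lemma expi2piNK (x : R) : expi2pi x * expi2pi (- x) = 1.
Proof. by rewrite -expi2piD subrr expi2pi0. Qed.

Lemma expi2pi_nat (n : nat) : expi2pi (n%:R : R) = 1.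
Proof.
elim: n => [|n IH]; first by rewrite expi2pi0.
by rewrite -addn1 natrD expi2piD IH expi2pi1 mulr1.
Qed.

Lemma expi2pi_int (n : int) : expi2pi (n%:~R : R) = 1.
Proof.
case: n => n; first by rewrite -pmulrn expi2pi_nat.
rewrite NegzE mulrNz -pmulrn.
have := expi2piNK (n.+1%:R); rewrite expi2pi_nat mul1r; done.
Qed.

Lemma expi2pi_addn (x : R) (n : int) : expi2pi (x + n%:~R) = expi2pi x.
Proof. by rewrite expi2piD expi2pi_int mulr1. Qed.

Lemma conjE (z : R[i]) : Num.conj z = conjc z.
Proof. by []. Qed.

Lemma expi2pi_norm (x : R) : expi2pi x * conjc (expi2pi x) = 1.
Proof. by rewrite -expi2piN expi2piNK. Qed.

Definition tg (A B al be : R) (s : R) := A * cos (al * s + be) + B * sin (al * s + be).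

Lemma is_derive_tg (A B al be x : R) :
  is_derive x 1 (tg A B al be) (tg (B * al) (- (A * al)) al be x).
Proof.
have hl : is_derive x 1 (fun s : R => al * s + be) al.
  have -> : (fun s : R => al * s + be) = al *: (@id R) + cst be by apply/funext.
  by apply: is_derive_eq; rewrite addr0 /GRing.scale /= mulr1.
have hc : is_derive x 1 (cos \o (fun s : R => al * s + be)) (- sin (al * x + be) * al).
  by apply: is_derive1_comp.
have hs : is_derive x 1 (sin \o (fun s : R => al * s + be)) (cos (al * x + be) * al).
  by apply: is_derive1_comp.
have -> : tg A B al be = A *: (cos \o (fun s : R => al * s + be)) + B *: (sin \o (fun s : R => al * s + be)).
  by apply/funext => s /=; rewrite /tg.
apply: is_derive_eq.
change (A * (- sin (al * x + be) * al) + B * (cos (al * x + be) * al) =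
  tg (B * al) (- (A * al)) al be x).
rewrite /tg; ring.
Qed.

Lemma derive1_tg (A B al be : R) :
  (tg A B al be)^`()%classic = tg (B * al) (- (A * al)) al be.
Proof. by apply/funext => x; rewrite derive1E; case: (is_derive_tg A B al be x). Qed.

Lemma derive1n_tg (A B al be : R) n : exists A' B',
  (tg A B al be)^`(n)%classic = tg A' B' al be.
Proof.
elim: n => [|n [A' [B' IH]]]; first by exists A, B; rewrite derive1n0.
by exists (B' * al), (- (A' * al)); rewrite derive1nS IH derive1_tg.
Qed.

Lemma smooth_tg (A B al be : R) : smoothR (tg A B al be).
Proof.
move=> n x; have [A' [B' ->]] := derive1n_tg A B al be n.
by case: (is_derive_tg A' B' al be x).
Qed.

Lemma smooth_cst (c : R) : smoothR (fun _ => c).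
Proof.
have -> : (fun _ : R => c) = tg c 0 0 0.
  by apply/funext => s; rewrite /tg mul0r addr0 cos0 mulr1 mul0r addr0.
exact: smooth_tg.
Qed.

Lemma smooth_cos (al be : R) : smoothR (fun s : R => cos (al * s + be)).
Proof.
have -> : (fun s : R => cos (al * s + be)) = tg 1 0 al be.
  by apply/funext => s; rewrite /tg mul1r mul0r addr0.
exact: smooth_tg.
Qed.

Lemma smooth_sin (al be : R) : smoothR (fun s : R => sin (al * s + be)).
Proof.
have -> : (fun s : R => sin (al * s + be)) = tg 0 1 al be.
  by apply/funext => s; rewrite /tg mul1r mul0r add0r.
exact: smooth_tg.
Qed.

Definition th (r : int) (t : R) : R := - r%:~R * ((`|t - 2| - `|t - 4| + 2) / 4).
Lemma th_cont r : continuous (th r).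
Proof.
move=> t. rewrite /th.
apply: cvgM; first exact: cvg_cst.
apply: cvgM; last exact: cvg_cst.
apply: cvgD; last exact: cvg_cst.
apply: cvgB; apply: cvg_norm; apply: cvgB; (exact: cvg_id || exact: cvg_cst).
Qed.

Lemma th_lo r t : t <= 2 -> th r t = 0.
Proof.
move=> h; rewrite /th ler0_norm; last lra.
rewrite ler0_norm; last lra.
have -> : (- (t - 2) - - (t - 4) + 2) = 0 by ring.
by rewrite mul0r mulr0.
Qed.

Lemma th_mid r t : 2 <= t <= 4 -> th r t = - r%:~R * ((t - 2) / 2).
Proof.
move=> /andP[h1 h2]; rewrite /th ger0_norm; last lra.
rewrite ler0_norm; last lra.
by congr (_ * _); field.
Qed.

Lemma th_hi r t : 4 <= t -> th r t = (- r)%:~R.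
Proof.
move=> h; rewrite /th ger0_norm; last lra.
rewrite ger0_norm; last lra.
rewrite intrN; have -> : (t - 2 - (t - 4) + 2) / 4 = 1 :> R by field.
by rewrite mulr1.
Qed.

Definition phase (r : int) (t : R) : R := - r%:~R * (t + 2^-1).

Lemma phaseN r t : phase r (- t) = - phase r t + (- r)%:~R.
Proof. rewrite /phase intrN. by field. Qed.

Variable m : nat.

Definition dvec (r : int) (t : R) : 'rV[R[i]]_m :=
  \row_i (if (i : nat) == 0%N then expi2pi (phase r t) else 1).
Definition Dm (r : int) (t : R) : 'M[R[i]]_m := diag_mx (dvec r t).

Lemma DmE r t a b : Dm r t a b =
  if a == b then (if (a : nat) == 0%N then expi2pi (phase r t) else 1) else 0.
Proof. by rewrite /Dm /dvec !mxE; case: (a == b); rewrite ?mulr1n ?mulr0n. Qed.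

Lemma conjc1 : conjc (1 : R[i]) = 1.
Proof. by rewrite /= oppr0. Qed.
Lemma conjc0 : conjc (0 : R[i]) = 0.
Proof. by rewrite /= oppr0. Qed.

Lemma DmN r t a b : Dm r (- t) a b = conjc (Dm r t a b).
Proof.
rewrite !DmE; case: (a == b); last by rewrite conjc0.
case: (_ == _); last by rewrite conjc1.
by rewrite phaseN expi2pi_addn expi2piN.
Qed.

Lemma Dm_unitary r t : unitary_mx (Dm r t).
Proof.
rewrite /unitary_mx; apply/matrixP => i j.
rewrite /Dm mul_diag_mx !mxE.
case: (eqVneq i j) => [<-|nij].
  rewrite !mulr1n; case: (_ == _); first exact: expi2pi_norm.
  by rewrite mul1r /= oppr0.
by rewrite !mulr0n /= oppr0 mulr0.
Qed.

Lemma Dm_one r t : expi2pi (phase r t) = 1 -> Dm r t = 1%:M.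
Proof.
move=> h; rewrite /Dm -diag_const_mx; congr diag_mx; apply/matrixP => i j.
by rewrite !mxE h if_same.
Qed.

Lemma Dm_lo r : Dm r (- 2^-1) = 1%:M.
Proof. by apply: Dm_one; rewrite /phase addNr mulr0 expi2pi0. Qed.

Lemma Dm_hi r : Dm r (2^-1) = 1%:M.
Proof.
apply: Dm_one; have -> : phase r 2^-1 = (- r)%:~R.
  by rewrite /phase intrN; by field.
exact: expi2pi_int.
Qed.

Lemma det_Dm r t : (0 < m)%N -> \det (Dm r t) = expi2pi (phase r t).
Proof.
move=> hm; rewrite det_diag (bigD1 (Ordinal hm)) //= big1 ?mulr1.
  by rewrite /dvec mxE eqxx.
move=> i hi; rewrite /dvec mxE ifF //; apply/negbTE.
by apply: contra hi => /eqP h; apply/eqP/val_inj; rewrite /= h.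
Qed.

Definition cond (k : pt R) : bool := (k.1 == 2^-1) && (- 2^-1 <= k.2 <= 2^-1).
Definition Xf (r : int) (k : pt R) : 'M[R[i]]_m := if cond k then Dm r k.2 else 1%:M.

Lemma edge34_cond k : edge 3 k \/ edge 4 k -> cond k.
Proof.
rewrite /cond /edge /on_seg /lerp /=.
case=> -[s /andP[h1 h2] ->] /=; apply/andP; split.
- by rewrite subrr mulr0 addr0.
- apply/andP; split; lra.
- by rewrite subrr mulr0 addr0.
- apply/andP; split; lra.
Qed.

Lemma cond_edge34 k : cond k -> edge 3 k \/ edge 4 k.
Proof.
case: k => k1 k2; rewrite /cond /edge /on_seg /lerp /= => /andP[/eqP -> /andP[h1 h2]].
have [hle|hgt] := lerP k2 0.
  left; exists (2 * (k2 + 2^-1)); first by apply/andP; split; lra.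
  congr (_, _); [by rewrite subrr mulr0 addr0| by field].
right; exists (2 * k2); first by apply/andP; split; lra.
congr (_, _); [by rewrite subrr mulr0 addr0| by field].
Qed.

Lemma Xone r k : (~~ cond k \/ k.2 = - 2^-1 \/ k.2 = 2^-1) -> Xf r k = 1%:M.
Proof.
rewrite /Xf; case: (cond k) => //; case=> [//|[->|->]].
  exact: Dm_lo.
exact: Dm_hi.
Qed.

Lemma X_unitary r k : unitary_mx (Xf r k).
Proof. rewrite /Xf; case: (cond k); first exact: Dm_unitary. rewrite -(Dm_lo r); exact: Dm_unitary. Qed.


Lemma half_neq0 : ((0 : R) == 2^-1) = false.
Proof. by rewrite eq_sym invr_eq0 pnatr_eq0. Qed.

Lemma cond0 k : k.1 = 0 -> ~~ cond k.
Proof. by move=> h; rewrite /cond h half_neq0. Qed.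

Lemma frame_rmul_1 (H : lmodType R[i]) (Phi : 'I_m -> H) : frame_rmul Phi 1%:M = Phi.
Proof.
apply/funext => b; rewrite /frame_rmul (bigD1 b) //= big1 ?addr0.
  by rewrite mxE eqxx mulr1n scale1r.
by move=> a hab; rewrite mxE (negbTE hab) mulr0n scale0r.
Qed.

Lemma lin_sum (H : lmodType R[i]) (T : H -> H) (HT : linear_op T)
  (c : 'I_m -> R[i]) (v : 'I_m -> H) :
  T (\sum_i c i *: v i) = \sum_i c i *: T (v i).
Proof.
have T0 : T 0 = 0.
  have := HT 1 0 0; rewrite !scale1r addr0 => h.
  have h2 : T 0 + T 0 = T 0 + 0 by rewrite addr0 -h.
  exact: (addrI _ h2).
apply: (big_ind2 (fun x y => T x = y)) => //.
  move=> x1 x2 y1 y2 <- <-; by have := HT 1 x1 y1; rewrite !scale1r.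
by move=> i _; have := HT (c i) (v i) 0; rewrite !addr0 T0 addr0.
Qed.

Lemma antilin_sum (H : lmodType R[i]) (T : H -> H) (HT : antilinear_op T)
  (c : 'I_m -> R[i]) (v : 'I_m -> H) :
  T (\sum_i c i *: v i) = \sum_i conjc (c i) *: T (v i).
Proof.
have T0 : T 0 = 0.
  have := HT 1 0 0; rewrite scale1r addr0 conjE conjc1 scale1r => h.
  have h2 : T 0 + T 0 = T 0 + 0 by rewrite addr0 -h.
  exact: (addrI _ h2).
apply: (big_ind2 (fun x y => T x = y)) => //.
  move=> x1 x2 y1 y2 <- <-; by have := HT 1 x1 y1; rewrite scale1r conjE conjc1 scale1r.
by move=> i _; have := HT (c i) (v i) 0; rewrite !addr0 T0 addr0.
Qed.

Lemma ent1 a b : exists gr gi : R -> R, [/\ smoothR gr, smoothR gi &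
  forall s, (1%:M : 'M[R[i]]_m) a b = gr s +i* gi s].
Proof.
exists (fun _ => if a == b then 1 else 0), (fun _ => 0); split; try exact: smooth_cst.
by move=> s; rewrite mxE; case: (a == b).
Qed.

Lemma entD r (f : R -> R) al be (hf : forall s, 2 * pi * phase r (f s) = al * s + be) a b :
  exists gr gi : R -> R, [/\ smoothR gr, smoothR gi &
  forall s, Dm r (f s) a b = gr s +i* gi s].
Proof.
case ab: (a == b); [case a0: ((a : nat) == 0%N)|].
- exists (fun s => cos (al * s + be)), (fun s => sin (al * s + be)).
  split; [exact: smooth_cos|exact: smooth_sin|].
  by move=> s; rewrite DmE ab a0 /expi2pi hf.
- exists (fun _ => 1), (fun _ => 0); split; try exact: smooth_cst.
  by move=> s; rewrite DmE ab a0.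
- exists (fun _ => 0), (fun _ => 0); split; try exact: smooth_cst.
  by move=> s; rewrite DmE ab.
Qed.

Lemma loop_val r t : (0 < m)%N -> 0 <= t <= 6 ->
  \det (Xf r (loop t)) = expi2pi (th r t).
Proof.
move=> hm /andP[h0 h6]; rewrite /loop.
case: ifP => h1.
  rewrite th_lo; last lra.
  rewrite Xone ?det1 ?expi2pi0 //; left; apply: cond0; rewrite /lerp /=.
  by rewrite subrr mulr0 addr0.
move/negbT: h1; rewrite -ltNge => h1.
case: ifP => h2.
  rewrite th_lo; last lra.
  rewrite Xone ?det1 ?expi2pi0 //; right; left; rewrite /lerp /=.
  by rewrite subrr mulr0 addr0.
move/negbT: h2; rewrite -ltNge => h2.
case: ifP => h3.
  rewrite /Xf ifT; last first.
    by apply: edge34_cond; left; exists (t - 2) => //; apply/andP; split; lra.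
  rewrite det_Dm // th_mid; last by apply/andP; split; lra.
  congr expi2pi; rewrite /phase /lerp /=; by field.
move/negbT: h3; rewrite -ltNge => h3.
case: ifP => h4.
  rewrite /Xf ifT; last first.
    by apply: edge34_cond; right; exists (t - 3) => //; apply/andP; split; lra.
  rewrite det_Dm // th_mid; last by apply/andP; split; lra.
  congr expi2pi; rewrite /phase /lerp /=; by field.
move/negbT: h4; rewrite -ltNge => h4.
case: ifP => h5.
  rewrite th_hi; last lra.
  rewrite Xone ?det1 ?expi2pi_int //; right; right; rewrite /lerp /=.
  by rewrite subrr mulr0 addr0.
rewrite th_hi; last lra.
rewrite Xone ?det1 ?expi2pi_int //; left; apply: cond0; rewrite /lerp /=.
by rewrite subrr mulr0 addr0.
Qed.

End S.

Lemma edge16_fst (R : realType) (k : pt R) : edge 1 k \/ edge 6 k -> k.1 = 0.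
Proof. by case=> -[s _ ->]; rewrite /lerp /= subrr mulr0 addr0. Qed.

Lemma edge2_snd (R : realType) (k : pt R) : edge 2 k -> k.2 = - 2^-1.
Proof. by case=> s _ ->; rewrite /lerp /= subrr mulr0 addr0. Qed.

Lemma edge5_snd (R : realType) (k : pt R) : edge 5 k -> k.2 = 2^-1.
Proof. by case=> s _ ->; rewrite /lerp /= subrr mulr0 addr0. Qed.

Theorem mainTheorem5 (R : realType) (H : lmodType R[i]) (ip : H -> H -> R[i])
  (m : nat) (P : pt R -> H -> H) (tau : latt -> H -> H) (Theta : H -> H) (r : int) :
  inner_product ip -> complete_ip ip -> separable_ip ip ->
  (0 < m)%N ->
  (forall k, orth_proj ip (P k)) ->
  (forall k, rank_eq (P k) m) ->
  (* (P2) *)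
  unitary_rep ip tau ->
  (forall k l v, P (padd k (lat_pt R l)) v = tau l (P k (tau (lat_opp l) v))) ->
  (* (P3) *)
  antiunitary_op ip Theta ->
  (forall v, Theta (Theta v) = v) ->
  (forall k v, P (popp k) v = Theta (P k (Theta v))) ->
  (* (P4) *)
  (forall l v, Theta (tau l v) = tau (lat_opp l) (Theta v)) ->
  exists X : pt R -> 'M[R[i]]_m,
    [/\ (forall k, bdry k -> unitary_mx (X k)),
        pw_smooth X,
        (* (i) *)
        winding (fun t => \det (X (loop t))) 0 6 (- r),
        (* (ii) *)
        (forall Phi : pt R -> 'I_m -> H,
           (forall k, bdry k -> onb_range ip (P k) (Phi k)) ->
           edge_sym Theta tau Phi ->
           edge_sym Theta tau (fun k => frame_rmul (Phi k) (X k))) &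
        (* (iii) *)
        (forall k, bdry k -> ~ (edge 3 k \/ edge 4 k) -> X k = 1%:M)].
Proof.
move=> _ _ _ hm _ _ hrep _ hTh _ _ _.
have [hlin _ _] := hrep.
have taulin : forall l, linear_op (tau l) by move=> l; have [] := hlin l.
have [Thanti _ _] := hTh.
exists (@Xf R m r); split.
- by move=> k _; exact: X_unitary.
- move=> i /andP[i1 i6] a b.
  case: i i1 i6 => [//|[|[|[|[|[|[|i]]]]]]] // _ _.
  + have [gr [gi [g1 g2 g3]]] := @ent1 R m a b; exists gr, gi; split => // s _.
    rewrite Xone ?g3 //; left; apply: cond0; by rewrite /lerp /= subrr mulr0 addr0.
  + have [gr [gi [g1 g2 g3]]] := @ent1 R m a b; exists gr, gi; split => // s _.
    by rewrite Xone ?g3 //; right; left; rewrite /lerp /= subrr mulr0 addr0.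
  + have [gr [gi [g1 g2 g3]]] := @entD R m r (fun s => (lerp (vert R 3) (vert R 4) s).2)
      (2 * pi * (- r%:~R) * 2^-1) 0 ltac:(by move=> s; rewrite /phase /lerp /=; field) a b.
    exists gr, gi; split => // s hs.
    rewrite /Xf ifT; first exact: g3.
    by apply: edge34_cond; left; exists s.
  + have [gr [gi [g1 g2 g3]]] := @entD R m r (fun s => (lerp (vert R 4) (vert R 5) s).2)
      (2 * pi * (- r%:~R) * 2^-1) (2 * pi * (- r%:~R) * 2^-1)
      ltac:(by move=> s; rewrite /phase /lerp /=; field) a b.
    exists gr, gi; split => // s hs.
    rewrite /Xf ifT; first exact: g3.
    by apply: edge34_cond; right; exists s.
  + have [gr [gi [g1 g2 g3]]] := @ent1 R m a b; exists gr, gi; split => // s _.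
    by rewrite Xone ?g3 //; right; right; rewrite /lerp /= subrr mulr0 addr0.
  + have [gr [gi [g1 g2 g3]]] := @ent1 R m a b; exists gr, gi; split => // s _.
    rewrite Xone ?g3 //; left; apply: cond0; by rewrite /lerp /= subrr mulr0 addr0.
- exists (th R r); split.
  + apply: continuous_subspaceT; exact: th_cont.
  + by move=> t ht; rewrite loop_val.
  + by rewrite th_hi ?th_lo ?subr0 //; lra.
- move=> Phi _ [S1 S2 S3 S5]; split.
  + move=> k hk a /=.
    have k1 := @edge16_fst _ _ hk.
    rewrite !Xone ?frame_rmul_1; first exact: S1.
    * by left; apply: cond0.
    * by left; apply: cond0; rewrite /= k1 oppr0.
  + move=> k hk a /=.
    have k2 := @edge2_snd _ _ hk.
    rewrite !Xone ?frame_rmul_1; first exact: S2.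
    * by right; left.
    * by right; right; rewrite /= k2; field.
  + move=> k hk a /=.
    have ck := @edge34_cond _ _ hk.
    have ck' : cond R (padd (lat_pt R lat_e1) (popp k)).
      move: ck; rewrite /cond /= => /andP[/eqP -> /andP[h1 h2]].
      apply/andP; split; first by apply/eqP; field.
      apply/andP; split; lra.
    rewrite /Xf ck ck'.
    have -> : (padd (lat_pt R lat_e1) (popp k)).2 = - k.2 by rewrite /= add0r.
    rewrite /frame_rmul antilin_sum // lin_sum //.
    apply: eq_bigr => b _; rewrite DmN S3 //.
  + move=> k hk a /=.
    have k2 := @edge5_snd _ _ hk.
    rewrite !Xone ?frame_rmul_1; first exact: S5.
    * by right; right.
    * by right; left; rewrite /= k2; field.
- move=> k _ hn; apply: Xone; left; apply/negP => /cond_edge34; exact: hn.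
Qed.
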